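(* Let $\mathcal{JF}=(\mathcal F,\mathcal F_d,R)$ be a complementary justification frame and $x\in\mathcal F_d$. If $\tau$ is a positional strategy for player $F$ in $G_{\mathcal{JF}}$, then $J_\tau(x)$ (the play graph of $\tau$ in $x$ with rule symbols filtered out and every label $y$ replaced by $\sim y$) is a connected, locally complete graph-like justification in $\mathcal{JF}$ with $\sim x$ as a root. If $\tau$ is a general strategy for $F$, then $J_\tau(x)$ (obtained in the same way from the play tree of $\tau$ in $x$) is a connected, locally complete tree-like justification in $\mathcal{JF}$ with $\sim x$ as a root.
   Context: Let $\mathcal F$ be a set (fact space) containing $\mathcal L=\{\mathbf t,\mathbf f,\mathbf u\}$ with an involution $\sim$ satisfying $\sim\mathbf t=\mathbf f$, $\sim\mathbf u=\mathbf u$, $\sim x\ne x$ for $x\ne\mathbf u$; $\sim A=\{\sim a:a\in A\}$. A justification frame is $\mathcal{JF}=(\mathcal F,\mathcal F_d,R)$ where $\mathcal F_d\subseteq\mathcal F$ satisfies $\sim\mathcal F_d=\mathcal F_d$, $\mathcal F_d\cap\mathcal L=\emptyset$, and $R\subseteq\mathcal F_d\times2^{\mathcal F}$ is a set of rules $x\gets A$ with nonempty bodies such that every $x\in\mathcal F_d$ heads a rule; $\mathcal F_o=\mathcal F\setminus\mathcal F_d$. A selection function for $x\in\mathcal F_d$ assigns to every body $A$ of a rule $x\gets A$ an element $s(A)\in A$; $\mathrm{Im}(s)$ is its image. $R^*$ is the set of all rules $\sim x\gets\sim\mathrm{Im}(s)$ with $x\in\mathcal F_d$ and $s$ a selection function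 for $x$. The frame is complementary if $R^*=R$. A justification in $\mathcal{JF}$ is a directed graph $(N,E)$ with labelling $\ell:N\to\mathcal F$ such that each internal node $n$ (node with an outgoing edge) has $\ell(n)\in\mathcal F_d$ and $\ell(n)\gets\{\ell(m):(n,m)\in E\}\in R$; graph-like if $\ell$ is injective; tree-like if its underlying undirected graph is acyclic; locally complete if no leaf is labelled by a defined fact; connected if its underlying undirected graph is connected; $y$ is a root if some node labelled $y$ reaches every node. Game graph $G_{\mathcal{JF}}$: states $S_T=\mathcal F$ (owned by $T$) and $S_F=\{r_{x\gets A}:x\gets A\in R\}$ (owned by $F$), edges $(x,r_{x\gets A})$ and $(r_{x\gets A},y)$ for every rule $x\gets A$, $y\in A$. A general strategy for $P\in\{T,F\}$ maps each finite path whose last state $s\in S_P$ has an outgoing edge to an outgoing edge of $s$; a positional strategy depends only on the last state. A path $s_0s_1\cdots$ is consistent with a strategy $\rho$ of $P$ if $\rho(s_0\cdots s_i)=(s_i,s_{i+1})$ whenever $s_i\in S_P$ and $s_{i+1}$ exists. The play tree of a general strategy $\rho$ in $x$ has as nodes the finite paths from $x$ consistent with $\rho$, labelled by their last state, with edges to one-step extensions; the play graph of a positional $\rho$ in $x$ is the subgraph of $G_{\mathcal{JF}}$ of states and edges on paths from $x$ consistent with $\rho$. Filtering out rule symbols: delete rule-symbol nodes and add an edge $(n,m)$ whenever $(n,k),(k,m)$ were edges with $k$ a rule-symbol node. *)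

(* Defs.v *)
From Stdlib Require Import List Relations.
Import ListNotations.
Set Implicit Arguments.

Section Defs.
Variable F : Type.

Definition img (f : F -> F) (A : F -> Prop) : F -> Prop :=
  fun z => exists a, A a /\ z = f a.

Definition fact_space (neg : F -> F) (t f u : F) : Prop :=
  (forall y, neg (neg y) = y) /\ neg t = f /\ neg u = u /\
  (forall y, y <> u -> neg y <> y) /\ t <> f /\ t <> u /\ f <> u.

(* Justification frame (F, Fd, R): a rule x <- A is R x A. *)
Definition jframe (neg : F -> F) (t f u : F) (Fd : F -> Prop)
  (R : F -> (F -> Prop) -> Prop) : Prop :=
  (forall y, Fd y <-> img neg Fd y) /\
  ~ Fd t /\ ~ Fd f /\ ~ Fd u /\
  (forall y A, R y A -> Fd y) /\
  (forall y A, R y A -> exists z, A z) /\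
  (forall y, Fd y -> exists A, R y A).

Definition selection (R : F -> (F -> Prop) -> Prop) (x : F) (s : (F -> Prop) -> F) :=
  forall A, R x A -> A (s A).

Definition Im_sel (R : F -> (F -> Prop) -> Prop) (x : F) (s : (F -> Prop) -> F) :
  F -> Prop := fun y => exists A, R x A /\ s A = y.

Definition Rstar (neg : F -> F) (Fd : F -> Prop) (R : F -> (F -> Prop) -> Prop)
  (y : F) (B : F -> Prop) : Prop :=
  exists x s, Fd x /\ selection R x s /\ y = neg x /\ B = img neg (Im_sel R x s).

Definition complementary (neg : F -> F) (Fd : F -> Prop)
  (R : F -> (F -> Prop) -> Prop) : Prop :=
  forall y B, Rstar neg Fd R y B <-> R y B.

Section Just.
Variables (Fd : F -> Prop) (R : F -> (F -> Prop) -> Prop).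
Variables (N : Type) (E : N -> N -> Prop) (lab : N -> F).

Definition internal (n : N) : Prop := exists m, E n m.

Definition justification : Prop :=
  forall n, internal n ->
    Fd (lab n) /\ R (lab n) (fun y => exists m, E n m /\ lab m = y).

Definition graph_like : Prop := forall n m, lab n = lab m -> n = m.

Definition uadj (a b : N) : Prop := E a b \/ E b a.

Fixpoint uchain (a : N) (l : list N) : Prop :=
  match l with
  | [] => True
  | b :: l' => uadj a b /\ uchain b l'
  end.

(* underlying undirected (multi)graph acyclic: no self-loop, no pair of
   opposite edges, and no simple cycle on >= 3 distinct nodes *)
Definition tree_like : Prop :=
  (forall n, ~ E n n) /\
  (forall n m, E n m -> ~ E m n) /\
  ~ (exists a l, NoDup (a :: l) /\ 2 <= length l /\ uchain a l /\
                 uadj (last l a) a).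

Definition locally_complete : Prop :=
  forall n, ~ internal n -> ~ Fd (lab n).

Definition connected : Prop :=
  forall n m, clos_refl_trans N uadj n m.

Definition is_root (y : F) : Prop :=
  exists n, lab n = y /\ forall m, clos_refl_trans N E n m.
End Just.

Inductive gstate : Type :=
| ST (y : F)                    (* fact state, owned by T *)
| SF (y : F) (A : F -> Prop).   (* rule symbol r_{y <- A}, owned by F *)

Definition fact_of (s : gstate) : F :=
  match s with ST y => y | SF y _ => y end.

Section Game.
Variable R : F -> (F -> Prop) -> Prop.

Definition valid_state (s : gstate) : Prop :=
  match s with ST _ => True | SF y A => R y A end.

Definition gedge (s s' : gstate) : Prop :=
  match s, s' with
  | ST y, SF y' A => y' = y /\ R y A
  | SF y A, ST z => R y A /\ A z
  | _, _ => False
  end.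

Fixpoint chain (a : gstate) (l : list gstate) : Prop :=
  match l with
  | [] => True
  | b :: l' => gedge a b /\ chain b l'
  end.

(* A finite path is s0 :: l with valid_state s0 and chain s0 l;
   its last state is last l s0. *)

(* General strategy for F: to every finite path ending in a rule state
   r_{y<-A} it assigns an outgoing edge, represented by its target fact. *)
Definition gen_strategy (tau : gstate -> list gstate -> F) : Prop :=
  forall s0 l y A, valid_state s0 -> chain s0 l -> last l s0 = SF y A ->
    A (tau s0 l).

Definition pos_strategy (tau : F -> (F -> Prop) -> F) : Prop :=
  forall y A, R y A -> A (tau y A).

Definition gen_consistent (tau : gstate -> list gstate -> F)
  (s0 : gstate) (l : list gstate) : Prop :=
  forall l1 s l2, l = l1 ++ s :: l2 ->
    forall y A, last l1 s0 = SF y A -> s = ST (tau s0 l1).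

Definition pos_consistent (tau : F -> (F -> Prop) -> F)
  (s0 : gstate) (l : list gstate) : Prop :=
  forall l1 s l2, l = l1 ++ s :: l2 ->
    forall y A, last l1 s0 = SF y A -> s = ST (tau y A).

Definition on_path (a b : gstate) (L : list gstate) : Prop :=
  exists l1 l2, L = l1 ++ a :: b :: l2.

Section Pos.
Variables (neg : F -> F) (tau : F -> (F -> Prop) -> F) (x : F).

Definition pos_play (l : list gstate) : Prop :=
  chain (ST x) l /\ pos_consistent tau (ST x) l.

(* fact states of the play graph (rule states are filtered out) *)
Definition JposN : Type :=
  { y : F | exists l, pos_play l /\ In (ST y) (ST x :: l) }.

Definition Jpos_lab (n : JposN) : F := neg (proj1_sig n).

(* y -> z iff y -> r_{y<-A} -> z are both edges of the play graph *)
Definition JposE (n m : JposN) : Prop :=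
  exists A,
    (exists l, pos_play l /\ on_path (ST (proj1_sig n)) (SF (proj1_sig n) A) (ST x :: l)) /\
    (exists l, pos_play l /\ on_path (SF (proj1_sig n) A) (ST (proj1_sig m)) (ST x :: l)).
End Pos.

Section Gen.
Variables (neg : F -> F) (tau : gstate -> list gstate -> F) (x : F).

(* nodes of the play tree: finite paths ST x :: p consistent with tau;
   we keep those whose last state is a fact state *)
Definition gen_node (p : list gstate) : Prop :=
  chain (ST x) p /\ gen_consistent tau (ST x) p /\
  exists y, last p (ST x) = ST y.

Definition JgenN : Type := { p : list gstate | gen_node p }.

Definition Jgen_lab (n : JgenN) : F := neg (fact_of (last (proj1_sig n) (ST x))).

(* n -> n ++ [r] -> n ++ [r; z] with r a rule symbol *)
Definition JgenE (n m : JgenN) : Prop :=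
  exists y A z, proj1_sig m = proj1_sig n ++ [SF y A; ST z].
End Gen.
End Game.
End Defs.

(* Main.v *)
Require Import Defs.
From Stdlib Require Import Arith List Relations ProofIrrelevance FunctionalExtensionality PropExtensionality Lia Permutation.
Import ListNotations.

Lemma last_cons' {A : Type} (l : list A) : forall a b, last (b :: l) a = last l b.
Proof.
  induction l as [|c l IH]; intros a b; [reflexivity|].
  change (last (c :: l) a = last (c :: l) b). rewrite !IH. reflexivity.
Qed.

Lemma last_in' {A : Type} (l : list A) : forall a, In (last l a) (a :: l).
Proof.
  induction l as [|c l IH]; intros a; [simpl; auto|].
  rewrite last_cons'. specialize (IH c). right. exact IH.
Qed.

Lemma last_in_ne {A : Type} (l : list A) d : l <> [] -> In (last l d) l.
Proof.
  destruct l as [|c l]; [congruence|]. intros _. rewrite last_cons'. apply last_in'.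
Qed.

Lemma rev_cases {A : Type} (l : list A) : l = [] \/ exists l' c, l = l' ++ [c].
Proof.
  induction l as [|c l IH] using rev_ind; [auto|]. right; eauto.
Qed.

Lemma sig_eq' {A : Type} (P : A -> Prop) (a b : {z | P z}) :
  proj1_sig a = proj1_sig b -> a = b.
Proof.
  destruct a as [a Ha], b as [b Hb]; simpl; intros ->. f_equal. apply proof_irrelevance.
Qed.

Lemma chain_app {F : Type} (R : F -> (F -> Prop) -> Prop) l1 : forall a l2,
  chain R a (l1 ++ l2) <-> chain R a l1 /\ chain R (last l1 a) l2.
Proof.
  induction l1 as [|b l1 IH]; intros a l2; [simpl; tauto|].
  rewrite last_cons'. simpl. rewrite IH. tauto.
Qed.

Lemma uchain_app {N : Type} (E : N -> N -> Prop) l1 : forall a l2,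
  uchain E a (l1 ++ l2) <-> uchain E a l1 /\ uchain E (last l1 a) l2.
Proof.
  induction l1 as [|b l1 IH]; intros a l2; [simpl; tauto|].
  rewrite last_cons'. simpl. rewrite IH. tauto.
Qed.

Definition gcons {T : Type} (P : list T -> T -> Prop) (l : list T) : Prop :=
  forall l1 s l2, l = l1 ++ s :: l2 -> P l1 s.

Lemma gcons_snoc {T : Type} (P : list T -> T -> Prop) l b :
  gcons P (l ++ [b]) <-> gcons P l /\ P l b.
Proof.
  split.
  - intros H. split.
    + intros l1 s l2 ->. apply (H l1 s (l2 ++ [b])). rewrite <- app_assoc. reflexivity.
    + apply (H l b []). reflexivity.
  - intros [H1 H2] l1 s l2 Heq.
    destruct (rev_cases l2) as [->|[l2' [c ->]]].
    + apply app_inj_tail in Heq. destruct Heq as [-> ->]. exact H2.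
    + rewrite app_comm_cons, app_assoc in Heq. apply app_inj_tail in Heq.
      destruct Heq as [Heq _]. exact (H1 _ _ _ Heq).
Qed.

Lemma gcons_prefix {T : Type} (P : list T -> T -> Prop) l1 l2 :
  gcons P (l1 ++ l2) -> gcons P l1.
Proof.
  intros H k1 s k2 ->. apply (H k1 s (k2 ++ l2)). rewrite <- app_assoc. reflexivity.
Qed.

Lemma gcons_nil {T : Type} (P : list T -> T -> Prop) : gcons P [].
Proof. intros l1 s l2 H. destruct l1; discriminate. Qed.

Lemma snoc_last {A : Type} (l : list A) a : exists k, a :: l = k ++ [last l a].
Proof.
  destruct (rev_cases (a :: l)) as [H|[k [c H]]]; [discriminate|].
  exists k. rewrite <- (last_cons' l a a). rewrite H at 2. rewrite last_last. exact H.
Qed.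

Lemma onpath_gedge {F : Type} (R : F -> (F -> Prop) -> Prop) l1 : forall a L b c l2,
  chain R a L -> a :: L = l1 ++ b :: c :: l2 -> gedge R b c.
Proof.
  induction l1 as [|d l1 IH]; intros a L b c l2 Hc Heq; simpl in Heq.
  - injection Heq as -> ->. exact (proj1 Hc).
  - injection Heq as -> HL. destruct L as [|e L].
    + destruct l1; discriminate.
    + apply (IH e L b c l2 (proj2 Hc) HL).
Qed.

Definition cyc {N : Type} (E : N -> N -> Prop) (c : list N) : Prop :=
  match c with
  | [] => False
  | a :: l => NoDup (a :: l) /\ 2 <= length l /\ uchain E a l /\ uadj E (last l a) a
  end.

Lemma cyc_rot1 {N : Type} (E : N -> N -> Prop) a l : cyc E (a :: l) -> cyc E (l ++ [a]).
Proof.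
  destruct l as [|b l]; [simpl; lia|].
  intros [Hnd [Hlen [[Hab Hch] Hcl]]].
  change (cyc E (b :: (l ++ [a]))).
  repeat split.
  - apply (Permutation_NoDup (Permutation_cons_append (b :: l) a)). exact Hnd.
  - rewrite length_app; simpl in *; lia.
  - change (uchain E b (l ++ [a])). apply uchain_app. split; [exact Hch|].
    simpl. split; [|exact I]. rewrite last_cons' in Hcl. exact Hcl.
  - rewrite last_last.
    unfold uadj in *. tauto.
Qed.

Lemma cyc_rot {N : Type} (E : N -> N -> Prop) l1 : forall l2, cyc E (l1 ++ l2) -> cyc E (l2 ++ l1).
Proof.
  induction l1 as [|a l1 IH]; intros l2 H.
  - rewrite app_nil_r. exact H.
  - simpl in H. apply cyc_rot1 in H. rewrite <- app_assoc in H. apply IH in H.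
    rewrite <- app_assoc in H. exact H.
Qed.

Lemma max_exists {N : Type} (f : N -> nat) (c : list N) :
  c <> [] -> exists w, In w c /\ forall v, In v c -> f v <= f w.
Proof.
  induction c as [|a c IH]; [congruence|]. intros _.
  destruct c as [|b c].
  - exists a. split; [left; auto|]. intros v [->|[]]. lia.
  - destruct IH as [w [Hw Hmax]]; [discriminate|].
    destruct (le_gt_dec (f a) (f w)).
    + exists w. split; [right; exact Hw|]. intros v [<-|Hv]; [lia|]. apply Hmax; exact Hv.
    + exists a. split; [left; auto|]. intros v [<-|Hv]; [lia|]. specialize (Hmax v Hv). lia.
Qed.

Lemma no_cycle {N : Type} (E : N -> N -> Prop) (f : N -> nat)
  (HE : forall a b, E a b -> f a < f b)
  (Hpar : forall a b c, E a c -> E b c -> a = b) :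
  ~ (exists a l, NoDup (a :: l) /\ 2 <= length l /\ uchain E a l /\ uadj E (last l a) a).
Proof.
  intros [a [l H]].
  assert (Hc : cyc E (a :: l)) by exact H.
  destruct (max_exists f (a :: l)) as [w [Hw Hmax]]; [discriminate|].
  destruct (in_split _ _ Hw) as [k1 [k2 Hk]].
  rewrite Hk in Hc. apply cyc_rot in Hc. simpl in Hc.
  assert (Hin : forall v, In v (w :: k2 ++ k1) -> In v (a :: l)).
  { intros v Hv. rewrite Hk. apply (Permutation_in _ (Permutation_app_comm (w :: k2) k1)). exact Hv. }
  destruct (k2 ++ k1) as [|c1 l'] eqn:Hl; [simpl in Hc; lia|].
  destruct Hc as [Hnd [Hlen [[H1 _] Hcl]]].
  assert (Hl' : l' <> []) by (intro; subst; simpl in Hlen; lia).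
  rewrite last_cons' in Hcl.
  set (cl := last l' c1) in *.
  assert (Hcl_in : In cl l') by (apply last_in_ne; exact Hl').
  assert (Ec1 : E c1 w).
  { destruct H1 as [H1|H1]; [|exact H1].
    exfalso. specialize (HE _ _ H1). specialize (Hmax c1 (Hin _ (or_intror (or_introl eq_refl)))). lia. }
  assert (Ecl : E cl w).
  { destruct Hcl as [Hcl|Hcl]; [exact Hcl|].
    exfalso. specialize (HE _ _ Hcl).
    specialize (Hmax cl (Hin _ (or_intror (or_intror Hcl_in)))). lia. }
  assert (c1 = cl) by exact (Hpar _ _ _ Ec1 Ecl).
  inversion Hnd as [|? ? _ Hnd2]. inversion Hnd2 as [|? ? Hnot _].
  apply Hnot. rewrite H0. exact Hcl_in.
Qed.

Lemma rt_uadj {N : Type} (E : N -> N -> Prop) a b :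
  clos_refl_trans N E a b -> clos_refl_trans N (uadj E) a b /\ clos_refl_trans N (uadj E) b a.
Proof.
  induction 1 as [a b H| a | a b c _ [I1 I2] _ [I3 I4]].
  - split; apply rt_step; unfold uadj; auto.
  - split; apply rt_refl.
  - split; eapply rt_trans; eauto.
Qed.

Lemma connected_of_root {N : Type} (E : N -> N -> Prop) r :
  (forall n, clos_refl_trans N E r n) -> connected E.
Proof.
  intros H n m. eapply rt_trans; [exact (proj2 (rt_uadj _ _ _ (H n)))|exact (proj1 (rt_uadj _ _ _ (H m)))].
Qed.

Lemma pos_cons_eq {F : Type} (tau : F -> (F -> Prop) -> F) s0 l :
  pos_consistent tau s0 l =
  gcons (fun l1 s => forall y A, last l1 s0 = SF y A -> s = ST (tau y A)) l.
Proof. reflexivity. Qed.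

Lemma pos_play_prefix {F : Type} (R : F -> (F -> Prop) -> Prop) (tau : F -> (F -> Prop) -> F) (x : F) l0 l2 :
  pos_play R tau x (l0 ++ l2) -> pos_play R tau x l0.
Proof.
  intros [Hc Hk]. split.
  - apply chain_app in Hc. tauto.
  - rewrite pos_cons_eq in *. eapply gcons_prefix; eauto.
Qed.

Lemma pos_node_path {F : Type} (R : F -> (F -> Prop) -> Prop) (tau : F -> (F -> Prop) -> F) (x : F) l y :
  In (ST y) (ST x :: l) -> exists l0 l2, l = l0 ++ l2 /\ last l0 (ST x) = ST y.
Proof.
  intros Hin. destruct (in_split _ _ Hin) as [k1 [k2 Hk]].
  destruct k1 as [|c k1].
  - simpl in Hk. injection Hk as H1 H2. exists [], l. split; [reflexivity|]. simpl. congruence.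
  - simpl in Hk. injection Hk as H1 H2. exists (k1 ++ [ST y]), k2.
    split; [rewrite <- app_assoc; exact H2|apply last_last].
Qed.

Lemma pos_play_ext {F : Type} (R : F -> (F -> Prop) -> Prop) (tau : F -> (F -> Prop) -> F) (x : F) l0 y A :
  pos_strategy R tau -> pos_play R tau x l0 -> last l0 (ST x) = ST y -> R y A ->
  pos_play R tau x (l0 ++ [SF y A; ST (tau y A)]).
Proof.
  intros Hs [Hc Hk] Hl HR. split.
  - apply chain_app. split; [exact Hc|]. rewrite Hl. simpl. repeat split; auto; apply Hs; exact HR.
  - rewrite pos_cons_eq in *. change [SF y A; ST (tau y A)] with ([SF y A] ++ [ST (tau y A)]).
    rewrite app_assoc. apply gcons_snoc. split.
    + apply gcons_snoc. split; [exact Hk|]. intros y' A' H. congruence.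
    + intros y' A' H. rewrite last_last in H. injection H as -> ->. reflexivity.
Qed.

Lemma pos_child {F : Type} (R : F -> (F -> Prop) -> Prop) (tau : F -> (F -> Prop) -> F) (x : F) (Hs : pos_strategy R tau)
  (n : JposN R tau x) A : R (proj1_sig n) A ->
  exists m : JposN R tau x, proj1_sig m = tau (proj1_sig n) A /\ @JposE F R tau x n m.
Proof.
  destruct n as [y Hy]; simpl. intros HR.
  pose proof Hy as [l [Hp Hin]].
  destruct (pos_node_path R tau x l y Hin) as [l0 [l2 [El Hl]]]. subst l.
  apply pos_play_prefix in Hp.
  pose proof (pos_play_ext R tau x l0 y A Hs Hp Hl HR) as HL.
  assert (Hm : exists l, pos_play R tau x l /\ In (ST (tau y A)) (ST x :: l)).
  { exists (l0 ++ [SF y A; ST (tau y A)]). split; [exact HL|].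
    right. apply in_or_app. right. right. left. reflexivity. }
  exists (exist _ (tau y A) Hm). split; [reflexivity|].
  exists A. simpl. destruct (snoc_last l0 (ST x)) as [k Hk]. rewrite Hl in Hk.
  split; exists (l0 ++ [SF y A; ST (tau y A)]); split; try exact HL.
  - exists k, [ST (tau y A)]. rewrite app_comm_cons, Hk, <- app_assoc. reflexivity.
  - exists (ST x :: l0), []. reflexivity.
Qed.

Lemma pos_edge_fwd {F : Type} (R : F -> (F -> Prop) -> Prop) (tau : F -> (F -> Prop) -> F) (x : F) (n m : JposN R tau x) :
  @JposE F R tau x n m -> exists A, R (proj1_sig n) A /\ proj1_sig m = tau (proj1_sig n) A.
Proof.
  intros [A [[l1 [[Hc1 _] [k1 [k2 H1]]]] [l2 [[_ Hk2] [j1 [j2 H2]]]]]].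
  exists A. split.
  - pose proof (onpath_gedge R k1 _ _ _ _ _ Hc1 H1) as G. simpl in G. tauto.
  - destruct j1 as [|d j1]; [discriminate|]. simpl in H2. injection H2 as _ H2.
    rewrite pos_cons_eq in Hk2.
    assert (H2' : l2 = (j1 ++ [SF (proj1_sig n) A]) ++ ST (proj1_sig m) :: j2)
      by (rewrite <- app_assoc; exact H2).
    specialize (Hk2 _ _ _ H2' (proj1_sig n) A). rewrite last_last in Hk2.
    specialize (Hk2 eq_refl). injection Hk2. auto.
Qed.

Lemma pos_reach {F : Type} (R : F -> (F -> Prop) -> Prop) (tau : F -> (F -> Prop) -> F) (x : F) (Hs : pos_strategy R tau) l :
  pos_play R tau x l -> forall (r n : JposN R tau x), proj1_sig r = x ->
  In (ST (proj1_sig n)) (ST x :: l) -> clos_refl_trans _ (@JposE F R tau x) r n.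
Proof.
  induction l as [|b l IH] using rev_ind; intros Hp r n Hr Hin.
  - destruct Hin as [Hin|[]]. injection Hin as Hin.
    assert (E0 : n = r) by (apply sig_eq'; rewrite Hr; exact (eq_sym Hin)). rewrite E0. apply rt_refl.
  - pose proof (pos_play_prefix _ _ _ _ _ Hp) as Hp'.
    rewrite app_comm_cons in Hin. apply in_app_or in Hin.
    destruct Hin as [Hin|[Hb|[]]]; [exact (IH Hp' r n Hr Hin)|].
    subst b. destruct Hp as [Hc Hk]. apply chain_app in Hc. destruct Hc as [Hc Hg].
    rewrite pos_cons_eq in Hk. apply gcons_snoc in Hk. destruct Hk as [_ Hk].
    destruct (last l (ST x)) as [z|y' A] eqn:El; simpl in Hg; [tauto|].
    destruct Hg as [[HR HA] _]. specialize (Hk y' A eq_refl). injection Hk as Hk.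
    destruct (rev_cases l) as [->|[l' [c ->]]]; [discriminate|].
    rewrite last_last in El. subst c.
    apply chain_app in Hc. destruct Hc as [_ Hg]. simpl in Hg.
    destruct (last l' (ST x)) as [z|y'' A''] eqn:El'; simpl in Hg; [|tauto].
    destruct Hg as [[Hyz _] _]. subst y'.
    assert (Hinz : In (ST z) (ST x :: l' ++ [SF z A])).
    { pose proof (last_in' l' (ST x)) as Hi. rewrite El' in Hi.
      destruct Hi as [Hi|Hi]; [left; exact Hi|right; apply in_or_app; left; exact Hi]. }
    set (nz := exist _ z (ex_intro _ _ (conj Hp' Hinz)) : JposN R tau x).
    apply rt_trans with nz.
    + apply IH; auto.
    + destruct (pos_child R tau x Hs nz A HR) as [m [Hm HE]].
      assert (E0 : n = m) by (apply sig_eq'; rewrite Hm; exact Hk).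
      rewrite E0. apply rt_step; exact HE.
Qed.


Lemma gen_cons_eq {F : Type} (tau : gstate F -> list (gstate F) -> F) s0 l :
  gen_consistent tau s0 l =
  gcons (fun l1 s => forall y A, last l1 s0 = SF y A -> s = ST (tau s0 l1)) l.
Proof. reflexivity. Qed.

Lemma gen_child {F : Type} (R : F -> (F -> Prop) -> Prop) (tau : gstate F -> list (gstate F) -> F)
  (x : F) (Hs : gen_strategy R tau) (n : JgenN R tau x) y A :
  last (proj1_sig n) (ST x) = ST y -> R y A ->
  exists m : JgenN R tau x,
    proj1_sig m = proj1_sig n ++ [SF y A; ST (tau (ST x) (proj1_sig n ++ [SF y A]))] /\
    @JgenE F R tau x n m.
Proof.
  destruct n as [p Hp]; simpl. intros Hl HR.
  pose proof Hp as [Hc [Hk _]].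
  assert (Hc1 : chain R (ST x) (p ++ [SF y A])).
  { apply chain_app. split; [exact Hc|]. rewrite Hl. simpl. auto. }
  assert (HA : A (tau (ST x) (p ++ [SF y A]))).
  { apply (Hs (ST x) (p ++ [SF y A]) y A I Hc1). apply last_last. }
  assert (Hm : gen_node R tau x (p ++ [SF y A; ST (tau (ST x) (p ++ [SF y A]))])).
  { change [SF y A; ST (tau (ST x) (p ++ [SF y A]))]
      with ([SF y A] ++ [ST (tau (ST x) (p ++ [SF y A]))]).
    rewrite app_assoc. split; [|split].
    - apply chain_app. split; [exact Hc1|]. rewrite last_last. simpl. auto.
    - rewrite gen_cons_eq in *. apply gcons_snoc. split.
      + apply gcons_snoc. split; [exact Hk|]. intros y' A' H. congruence.
      + intros y' A' H. reflexivity.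
    - eexists. apply last_last. }
  exists (exist _ _ Hm). split; [reflexivity|]. exists y, A, (tau (ST x) (p ++ [SF y A])). reflexivity.
Qed.

Lemma gen_edge_fwd {F : Type} (R : F -> (F -> Prop) -> Prop) (tau : gstate F -> list (gstate F) -> F)
  (x : F) (n m : JgenN R tau x) y :
  @JgenE F R tau x n m -> last (proj1_sig n) (ST x) = ST y ->
  exists A, R y A /\ last (proj1_sig m) (ST x) = ST (tau (ST x) (proj1_sig n ++ [SF y A])).
Proof.
  intros [y' [A [z Hm]]] Hl. destruct m as [q Hq]. simpl in *.
  destruct Hq as [Hc [Hk _]]. subst q.
  exists A.
  change [SF y' A; ST z] with ([SF y' A] ++ [ST z]) in *.
  rewrite app_assoc in *. rewrite last_last.
  apply chain_app in Hc. destruct Hc as [Hc _]. apply chain_app in Hc.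
  destruct Hc as [_ Hg]. rewrite Hl in Hg. simpl in Hg. destruct Hg as [[-> HR] _].
  split; [exact HR|].
  rewrite gen_cons_eq in Hk. apply gcons_snoc in Hk. destruct Hk as [_ Hk].
  apply (Hk y A). apply last_last.
Qed.

Lemma JgenE_len {F : Type} (R : F -> (F -> Prop) -> Prop) (tau : gstate F -> list (gstate F) -> F)
  (x : F) (n m : JgenN R tau x) :
  @JgenE F R tau x n m -> length (proj1_sig n) < length (proj1_sig m).
Proof. intros [y [A [z ->]]]. rewrite length_app. simpl. lia. Qed.

Lemma JgenE_par {F : Type} (R : F -> (F -> Prop) -> Prop) (tau : gstate F -> list (gstate F) -> F)
  (x : F) (a b c : JgenN R tau x) :
  @JgenE F R tau x a c -> @JgenE F R tau x b c -> a = b.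
Proof.
  intros [y [A [z H1]]] [y' [A' [z' H2]]]. apply sig_eq'.
  rewrite H1 in H2.
  change [SF y A; ST z] with ([SF y A] ++ [ST z]) in H2.
  change [SF y' A'; ST z'] with ([SF y' A'] ++ [ST z']) in H2.
  rewrite !app_assoc in H2. apply app_inj_tail in H2. destruct H2 as [H2 _].
  apply app_inj_tail in H2. tauto.
Qed.

Lemma gen_reach {F : Type} (R : F -> (F -> Prop) -> Prop) (tau : gstate F -> list (gstate F) -> F)
  (x : F) (r : JgenN R tau x) (Hr : proj1_sig r = []) :
  forall k (n : JgenN R tau x), length (proj1_sig n) <= k -> clos_refl_trans _ (@JgenE F R tau x) r n.
Proof.
  induction k as [|k IH]; intros n Hn.
  - destruct (proj1_sig n) eqn:E0; [|simpl in Hn; lia].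
    assert (n = r) as -> by (apply sig_eq'; congruence). apply rt_refl.
  - destruct (rev_cases (proj1_sig n)) as [Ep|[p' [c Ep]]].
    + assert (n = r) as -> by (apply sig_eq'; congruence). apply rt_refl.
    + pose proof (proj2_sig n) as Hp. simpl in Hp. rewrite Ep in Hp, Hn.
      destruct Hp as [Hc [Hk [y Hy]]]. rewrite last_last in Hy. subst c.
      destruct (rev_cases p') as [->|[p'' [c' ->]]].
      * simpl in Hc. tauto.
      * rewrite <- app_assoc in Hc, Hk. simpl in Hc, Hk.
        apply chain_app in Hc. destruct Hc as [Hc Hg]. simpl in Hg.
        destruct Hg as [Hg1 [Hg2 _]].
        destruct c' as [z|y' A]; simpl in Hg2; [tauto|].
        destruct (last p'' (ST x)) as [w|w B] eqn:El; simpl in Hg1; [|tauto].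
        assert (Hq : gen_node R tau x p'').
        { split; [exact Hc|split; [|exists w; exact El]].
          rewrite gen_cons_eq in *. eapply gcons_prefix; exact Hk. }
        apply rt_trans with (exist _ p'' Hq).
        -- apply IH. simpl. rewrite !length_app in Hn. simpl in Hn. lia.
        -- apply rt_step. exists y', A, y. simpl. rewrite Ep, <- app_assoc. reflexivity.
Qed.

Lemma Fd_neg {F : Type} (neg : F -> F) t f u Fd R :
  fact_space neg t f u -> jframe neg t f u Fd R -> forall y, Fd (neg y) <-> Fd y.
Proof.
  intros [Hinv _] [HFd _] y. split.
  - intros H. apply HFd in H. destruct H as [a [Ha Hy]].
    assert (y = a) as -> by (rewrite <- (Hinv y), Hy, Hinv; reflexivity). exact Ha.
  - intros H. apply HFd. exists y. auto.
Qed.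

Theorem mainTheorem7 (F : Type) (neg : F -> F) (t f u : F) (Fd : F -> Prop)
  (R : F -> (F -> Prop) -> Prop)
  (HFS : fact_space neg t f u) (HJF : jframe neg t f u Fd R)
  (HC : complementary neg Fd R) (x : F) (Hx : Fd x) :
  (forall tau : F -> (F -> Prop) -> F, pos_strategy R tau ->
     justification Fd R (@JposE F R tau x) (@Jpos_lab F R neg tau x) /\
     connected (@JposE F R tau x) /\
     locally_complete Fd (@JposE F R tau x) (@Jpos_lab F R neg tau x) /\
     graph_like (@Jpos_lab F R neg tau x) /\
     is_root (@JposE F R tau x) (@Jpos_lab F R neg tau x) (neg x)) /\
  (forall tau : gstate F -> list (gstate F) -> F, gen_strategy R tau ->
     justification Fd R (@JgenE F R tau x) (@Jgen_lab F R neg tau x) /\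
     connected (@JgenE F R tau x) /\
     locally_complete Fd (@JgenE F R tau x) (@Jgen_lab F R neg tau x) /\
     tree_like (@JgenE F R tau x) /\
     is_root (@JgenE F R tau x) (@Jgen_lab F R neg tau x) (neg x)).
Proof.
  pose proof (Fd_neg neg t f u Fd R HFS HJF) as HFn.
  destruct HFS as [Hinv _].
  destruct HJF as [_ [_ [_ [_ [HRFd [_ HFdR]]]]]].
  split.
  - intros tau Hs.
    assert (Hpp0 : pos_play R tau x []).
    { split; [exact I|]. rewrite pos_cons_eq. apply gcons_nil. }
    set (r := exist _ x (ex_intro _ [] (conj Hpp0 (or_introl eq_refl))) : JposN R tau x).
    assert (Hreach : forall n, clos_refl_trans _ (@JposE F R tau x) r n).
    { intros n. pose proof (proj2_sig n) as [l [Hp Hin]].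
      exact (pos_reach R tau x Hs l Hp r n eq_refl Hin). }
    split; [|split; [|split; [|split]]].
    + intros n Hint. unfold Jpos_lab.
      destruct Hint as [m0 Hm0]. destruct (pos_edge_fwd R tau x n m0 Hm0) as [A0 [HR0 _]].
      assert (HFy : Fd (proj1_sig n)) by exact (HRFd _ _ HR0).
      split; [apply HFn; exact HFy|].
      apply HC. exists (proj1_sig n), (tau (proj1_sig n)).
      split; [exact HFy|]. split; [intros A HA; apply Hs; exact HA|]. split; [reflexivity|].
      apply functional_extensionality. intros z. apply propositional_extensionality. split.
      * intros [m [Hm <-]]. destruct (pos_edge_fwd R tau x n m Hm) as [A [HR Hmt]].
        exists (proj1_sig m). split; [|reflexivity]. exists A. auto.
      * intros [a [[A [HR <-]] ->]].
        destruct (pos_child R tau x Hs n A HR) as [m [Hm HE]].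
        exists m. split; [exact HE|]. rewrite Hm. reflexivity.
    + exact (connected_of_root _ r Hreach).
    + intros n Hint HF. unfold Jpos_lab in HF. apply (proj1 (HFn _)) in HF.
      destruct (HFdR _ HF) as [A HR].
      destruct (pos_child R tau x Hs n A HR) as [m [_ HE]]. apply Hint. exists m. exact HE.
    + intros n m H. unfold Jpos_lab in H. apply sig_eq'.
      rewrite <- (Hinv (proj1_sig n)), H, Hinv. reflexivity.
    + exists r. split; [reflexivity|exact Hreach].
  - intros tau Hs.
    assert (Hg0 : gen_node R tau x []).
    { split; [exact I|split; [rewrite gen_cons_eq; apply gcons_nil|exists x; reflexivity]]. }
    set (r := exist _ [] Hg0 : JgenN R tau x).
    assert (Hreach : forall n, clos_refl_trans _ (@JgenE F R tau x) r n).
    { intros n. exact (gen_reach R tau x r eq_refl _ n (le_n _)). }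
    assert (Hlast : forall n : JgenN R tau x, exists y, last (proj1_sig n) (ST x) = ST y).
    { intros n. exact (proj2 (proj2 (proj2_sig n))). }
    split; [|split; [|split; [|split]]].
    + intros n Hint. unfold Jgen_lab. destruct (Hlast n) as [y Hy]. rewrite Hy. simpl.
      destruct Hint as [m0 Hm0]. destruct (gen_edge_fwd R tau x n m0 y Hm0 Hy) as [A0 [HR0 _]].
      assert (HFy : Fd y) by exact (HRFd _ _ HR0).
      split; [apply HFn; exact HFy|].
      apply HC. exists y, (fun A => tau (ST x) (proj1_sig n ++ [SF y A])).
      split; [exact HFy|]. split.
      { intros A HA. apply (Hs (ST x) _ y A I).
        - apply chain_app. split; [exact (proj1 (proj2_sig n))|]. rewrite Hy. simpl. auto.
        - apply last_last. }
      split; [reflexivity|].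
      apply functional_extensionality. intros z. apply propositional_extensionality. split.
      * intros [m [Hm <-]]. destruct (gen_edge_fwd R tau x n m y Hm Hy) as [A [HR Hmt]].
        rewrite Hmt. simpl.
        exists (tau (ST x) (proj1_sig n ++ [SF y A])). split; [|reflexivity]. exists A. auto.
      * intros [a [[A [HR <-]] ->]].
        destruct (gen_child R tau x Hs n y A Hy HR) as [m [Hm HE]].
        exists m. split; [exact HE|]. rewrite Hm.
        change [SF y A; ST (tau (ST x) (proj1_sig n ++ [SF y A]))]
          with ([SF y A] ++ [ST (tau (ST x) (proj1_sig n ++ [SF y A]))]).
        rewrite app_assoc, last_last. reflexivity.
    + exact (connected_of_root _ r Hreach).
    + intros n Hint HF. unfold Jgen_lab in HF. destruct (Hlast n) as [y Hy].
      rewrite Hy in HF. simpl in HF. apply (proj1 (HFn _)) in HF.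
      destruct (HFdR _ HF) as [A HR].
      destruct (gen_child R tau x Hs n y A Hy HR) as [m [_ HE]]. apply Hint. exists m. exact HE.
    + split; [|split].
      * intros n H. pose proof (JgenE_len R tau x n n H). lia.
      * intros n m H1 H2. pose proof (JgenE_len R tau x n m H1).
        pose proof (JgenE_len R tau x m n H2). lia.
      * apply (no_cycle _ (fun n : JgenN R tau x => length (proj1_sig n))).
        -- intros a b H. exact (JgenE_len R tau x a b H).
        -- intros a b c H1 H2. exact (JgenE_par R tau x a b c H1 H2).
    + exists r. split; [reflexivity|exact Hreach].
Qed.
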